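(* Let $\{\mathcal H,\gamma,\ell,\ell^{(2)}\}$ be metric hypersurface data and $\theta$ any one-form on $\mathcal H$. Then $$n^b\mathring\nabla_a\theta_b=\mathring\nabla_a\big(\theta(n)\big)-\theta(n)s_a-P^{bc}U_{ac}\theta_b+n^{(2)}\big(\theta(n)\mathring\nabla_a\ell^{(2)}+P^{bc}F_{ac}\theta_b\big),$$ $$n^b\mathring\nabla_b\theta_a=(\mathcal L_n\theta)_a-\theta(n)s_a-P^{bc}U_{ac}\theta_b+n^{(2)}\big(\theta(n)\mathring\nabla_a\ell^{(2)}+P^{bc}F_{ac}\theta_b\big),$$ $$2n^b\mathring\nabla_{(a}\theta_{b)}=(\mathcal L_n\theta)_a+\mathring\nabla_a\big(\theta(n)\big)-2\big(\theta(n)s_a+P^{bc}U_{ac}\theta_b\big)+2n^{(2)}\big(\theta(n)\mathring\nabla_a\ell^{(2)}+P^{bc}F_{ac}\theta_b\big),$$ $$n^an^b\mathring\nabla_a\theta_b=\mathcal L_n\big(\theta(n)\big)+n^{(2)}\theta(n)n(\ell^{(2)})+P^{bc}\theta_b\Big(2n^{(2)}s_c-\tfrac12(n^{(2)})^2\mathring\nabla_c\ell^{(2)}-\tfrac12\mathring\nabla_cn^{(2)}\Big).$$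
   Context: Metric hypersurface data: $\mathcal H$ smooth $\mathfrak n$-manifold with symmetric $(0,2)$-tensor $\gamma$, one-form $\ell$, function $\ell^{(2)}$ such that $\mathcal A((W,a),(V,b))=\gamma(W,V)+a\ell(V)+b\ell(W)+ab\ell^{(2)}$ is non-degenerate on each $T_p\mathcal H\times\mathbb R$. $P$ (symmetric $(2,0)$), $n$, $n^{(2)}$ defined by $\gamma_{ab}n^b+n^{(2)}\ell_a=0$, $\ell_an^a+n^{(2)}\ell^{(2)}=1$, $P^{ab}\ell_b+\ell^{(2)}n^a=0$, $P^{ac}\gamma_{cb}+\ell_bn^a=\delta^a_b$. $U_{ab}=\frac12(\mathcal L_n\gamma)_{ab}+\ell_{(a}\partial_{b)}n^{(2)}$, $F_{ab}=\partial_{[a}\ell_{b]}$ ($F=\frac12d\ell$), $s_a=n^bF_{ba}$, $\theta(n)=\theta_an^a$; brackets: weight-$\frac12$ (anti)symmetrization. $\mathring\nabla$ is the torsion-free connection on $\mathcal H$ with $\mathring\nabla_a\gamma_{bc}=-\ell_cU_{ab}-\ell_bU_{ac}$ and $\mathring\nabla_a\ell_b=F_{ab}-\ell^{(2)}U_{ab}$. *)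

(* Defs.v *)
(* Local-coordinate formalization:
   the hypersurface H is represented by an open coordinate domain U of
   'rV[R]_n (n = \mathfrak n); tensors are given by their components. *)
From HB Require Import structures.
From mathcomp Require Import all_boot all_order all_algebra.
From mathcomp Require Import all_classical all_reals all_analysis.
Set Implicit Arguments. Unset Strict Implicit. Unset Printing Implicit Defensive.
Import Order.TTheory GRing.Theory Num.Theory.
Import numFieldNormedType.Exports.
Local Open Scope ring_scope.
Local Open Scope classical_set_scope.

Section Defs.
Variables (R : realType) (n : nat).
Local Notation V := 'rV[R]_n.

Definition ei (i : 'I_n) : V := delta_mx 0 i.
Definition pd (f : V -> R) (i : 'I_n) (x : V) : R := derive f x (ei i).

Definition diff_on (U : set V) (f : V -> R) := forall x, U x -> differentiable f x.

Definition metric_hypersurface_data (U : set V)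
  (gam : 'I_n -> 'I_n -> V -> R) (ell : 'I_n -> V -> R) (ell2 : V -> R)
  (P : 'I_n -> 'I_n -> V -> R) (nv : 'I_n -> V -> R) (n2 : V -> R) : Prop :=
  open U /\
  (forall a b, diff_on U (gam a b)) /\ (forall a, diff_on U (ell a)) /\
  diff_on U ell2 /\ (forall a b, diff_on U (P a b)) /\
  (forall a, diff_on U (nv a)) /\ diff_on U n2 /\
  forall x, U x ->
    (forall a b, gam a b x = gam b a x) /\ (forall a b, P a b x = P b a x) /\
    (* non-degeneracy of A on T_pH x R *)
    (block_mx (\matrix_(a, b) gam a b x) (\col_a ell a x)
              (\row_b ell b x) (ell2 x)%:M : 'M[R]_(n + 1)) \in unitmx /\
    (forall a, \sum_(b < n) gam a b x * nv b x + n2 x * ell a x = 0) /\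
    (\sum_(a < n) ell a x * nv a x + n2 x * ell2 x = 1) /\
    (forall a, \sum_(b < n) P a b x * ell b x + ell2 x * nv a x = 0) /\
    (forall a b, \sum_(c < n) P a c x * gam c b x + ell b x * nv a x
                 = (a == b)%:R).

Definition lie_fun (nv : 'I_n -> V -> R) (f : V -> R) (x : V) : R :=
  \sum_(b < n) nv b x * pd f b x.
Definition lie_form (nv : 'I_n -> V -> R) (th : 'I_n -> V -> R) (a : 'I_n) (x : V) : R :=
  \sum_(b < n) (nv b x * pd (th a) b x + th b x * pd (nv b) a x).
Definition lie_sym2 (nv : 'I_n -> V -> R) (g : 'I_n -> 'I_n -> V -> R)
  (a b : 'I_n) (x : V) : R :=
  \sum_(c < n) (nv c x * pd (g a b) c x + g c b x * pd (nv c) a x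
                + g a c x * pd (nv c) b x).

Definition Uten nv n2 gam (ell : 'I_n -> V -> R) (a b : 'I_n) (x : V) : R :=
  2^-1 * lie_sym2 nv gam a b x
  + 2^-1 * (ell a x * pd n2 b x + ell b x * pd n2 a x).
Definition Ften (ell : 'I_n -> V -> R) (a b : 'I_n) (x : V) : R :=
  2^-1 * (pd (ell b) a x - pd (ell a) b x).
Definition sform nv ell (a : 'I_n) (x : V) : R := \sum_(b < n) nv b x * Ften ell b a x.
Definition contr (th nv : 'I_n -> V -> R) (x : V) : R := \sum_(a < n) th a x * nv a x.

(* covariant derivatives for a connection with Christoffel symbols
   Gam c a b = Gamma^c_{ab} *)
Definition cov_fun (f : V -> R) (a : 'I_n) (x : V) : R := pd f a x.
Definition cov_form (Gam : 'I_n -> 'I_n -> 'I_n -> V -> R) (th : 'I_n -> V -> R)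
  (a b : 'I_n) (x : V) : R :=
  pd (th b) a x - \sum_(c < n) Gam c a b x * th c x.
Definition cov_sym2 (Gam : 'I_n -> 'I_n -> 'I_n -> V -> R) (g : 'I_n -> 'I_n -> V -> R)
  (a b c : 'I_n) (x : V) : R :=
  pd (g b c) a x - \sum_(d < n) Gam d a b x * g d c x
                 - \sum_(d < n) Gam d a c x * g b d x.

Definition is_ring_nabla (U : set V) gam ell ell2 nv n2
  (Gam : 'I_n -> 'I_n -> 'I_n -> V -> R) : Prop :=
  forall x, U x ->
    (forall c a b, Gam c a b x = Gam c b a x) /\
    (forall a b c, cov_sym2 Gam gam a b c x
                   = - ell c x * Uten nv n2 gam ell a b x
                     - ell b x * Uten nv n2 gam ell a c x) /\
    (forall a b, cov_form Gam ell a b x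
                 = Ften ell a b x - ell2 x * Uten nv n2 gam ell a b x).

End Defs.

(* Main.v *)
Require Import Defs.
From HB Require Import structures.
From mathcomp Require Import all_boot all_order all_algebra.
From mathcomp Require Import all_classical all_reals all_analysis.
From mathcomp Require Import ring lra.
Import Order.TTheory GRing.Theory Num.Theory.
Import numFieldNormedType.Exports.
Local Open Scope ring_scope.
Local Open Scope classical_set_scope.

Lemma solve0 {R : ringType} {x y e : R} : e = 0 -> x - y = e -> x = y.
Proof. by move=> -> /eqP; rewrite subr_eq0 => /eqP. Qed.

Lemma solveEq {R : ringType} {x y a b : R} : a = b -> x - y = a - b -> x = y.
Proof. by move=> -> /eqP; rewrite subrr subr_eq0 => /eqP. Qed.

Section PD.
Variables (R : realType) (n : nat).
Local Notation V := 'rV[R]_n.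
Implicit Types (f g : V -> R) (x v : V).

Lemma pdD f g x v : derivable f x v -> derivable g x v ->
  derive (fun y => f y + g y) x v = derive f x v + derive g x v.
Proof. move=> df dg; exact: (deriveD df dg). Qed.

Lemma dvD f g x v : derivable f x v -> derivable g x v ->
  derivable (fun y => f y + g y) x v.
Proof. move=> df dg; exact: (derivableD df dg). Qed.

Lemma pdM f g x v : derivable f x v -> derivable g x v ->
  derive (fun y => f y * g y) x v = f x * derive g x v + g x * derive f x v.
Proof. move=> df dg; exact: (deriveM df dg). Qed.

Lemma dvM f g x v : derivable f x v -> derivable g x v ->
  derivable (fun y => f y * g y) x v.
Proof. move=> df dg; exact: (derivableM df dg). Qed.

Lemma pdS (F : 'I_n -> V -> R) x v : (forall i, derivable (F i) x v) ->
  derive (fun y => \sum_(i < n) F i y) x v = \sum_(i < n) derive (F i) x v.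
Proof.
move=> dF; rewrite -derive_sum //; congr derive; apply/funext => y.
by rewrite fct_sumE.
Qed.

Lemma dvS (F : 'I_n -> V -> R) x v : (forall i, derivable (F i) x v) ->
  derivable (fun y => \sum_(i < n) F i y) x v.
Proof.
move=> dF; have := derivable_sum dF.
by have -> : (\sum_(i < n) F i) = (fun y => \sum_(i < n) F i y) by apply/funext => y; rewrite fct_sumE.
Qed.

Lemma pd_near (U : set V) f g x v : open U -> U x ->
  (forall y, U y -> f y = g y) -> derive f x v = derive g x v.
Proof.
move=> oU Ux fg; apply: near_eq_derive.
have : nbhs x U by apply: open_nbhs_nbhs; split.
by apply: filterS => y /fg.
Qed.

Lemma pd_cst (c : R) x v : derive (fun _ : V => c) x v = 0.
Proof. exact: (derive_cst c x v). Qed.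

Lemma pd_sumprod (f g : 'I_n -> V -> R) (h k : V -> R) x v :
  (forall i, derivable (f i) x v) -> (forall i, derivable (g i) x v) ->
  derivable h x v -> derivable k x v ->
  derive (fun y => \sum_(i < n) f i y * g i y + h y * k y) x v =
  \sum_(i < n) (f i x * derive (g i) x v + g i x * derive (f i) x v)
  + (h x * derive k x v + k x * derive h x v).
Proof.
move=> df dg dh dk.
rewrite pdD; last 2 first.
- by apply: dvS => i; apply: dvM.
- exact: dvM.
rewrite pdS; last by move=> i; apply: dvM.
rewrite pdM //; congr (_ + _); apply: eq_bigr => i _; exact: pdM.
Qed.

Lemma pd_sumprod0 (f g : 'I_n -> V -> R) x v :
  (forall i, derivable (f i) x v) -> (forall i, derivable (g i) x v) ->
  derive (fun y => \sum_(i < n) f i y * g i y) x v =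
  \sum_(i < n) (f i x * derive (g i) x v + g i x * derive (f i) x v).
Proof.
move=> df dg; rewrite pdS; last by move=> i; apply: dvM.
apply: eq_bigr => i _; exact: pdM.
Qed.
End PD.

Section Alg.
Variables (R : realFieldType) (n : nat).
Local Notation I := 'I_n.
Variables (g p G dg : I -> I -> R) (l nn dn dl u f : I -> R) (l2 m2 dm2 dl2 : R).

Hypothesis Hg : forall c b, dg c b = - l b * u c - l c * u b
   + \sum_(d < n) G d c * g d b + \sum_(d < n) G d b * g c d.
Hypothesis Hl : forall c, dl c = f c - l2 * u c + \sum_(d < n) G d c * l d.
Hypothesis Hw : forall c, \sum_(b < n) g c b * nn b + m2 * l c = 0.
Hypothesis Hw2 : \sum_(b < n) l b * nn b + m2 * l2 = 1.
Hypothesis HPl : forall c, \sum_(b < n) p c b * l b + l2 * nn c = 0.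
Hypothesis HPg : forall c b, \sum_(d < n) p c d * g d b + l b * nn c = (c == b)%:R.
Hypothesis HD1 : forall c, \sum_(b < n) (g c b * dn b + nn b * dg c b) + (m2 * dl c + l c * dm2) = 0.
Hypothesis HD2 : \sum_(b < n) (l b * dn b + nn b * dl b) + (m2 * dl2 + l2 * dm2) = 0.

Definition X b := dn b + \sum_(d < n) G b d * nn d.
Definition A c := \sum_(b < n) (l b * u c + l c * u b) * nn b - m2 * (f c - l2 * u c).
Definition B := - \sum_(b < n) (f b - l2 * u b) * nn b - m2 * dl2.

Lemma step1 c : \sum_(b < n) g c b * X b + l c * dm2 = A c.
Proof.
have T1 : \sum_(b < n) nn b * \sum_(d < n) G d c * g d b
          = - m2 * \sum_(d < n) G d c * l d.
  under eq_bigr do rewrite big_distrr /=.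
  rewrite exchange_big /= big_distrr; apply: eq_bigr => d _ /=.
  have E : \sum_(b < n) g d b * nn b = - m2 * l d by apply: (solve0 (Hw d)); ring.
  transitivity (G d c * \sum_(b < n) g d b * nn b).
    by rewrite big_distrr; apply: eq_bigr => b _ /=; ring.
  by rewrite E; ring.
have T2 : \sum_(b < n) nn b * \sum_(d < n) G d b * g c d
          = \sum_(b < n) g c b * \sum_(d < n) G b d * nn d.
  under [RHS]eq_bigr do rewrite big_distrr /=.
  rewrite [RHS]exchange_big /=; apply: eq_bigr => b _.
  by rewrite big_distrr; apply: eq_bigr => d _ /=; ring.
have E : \sum_(b < n) nn b * dg c b =
   - \sum_(b < n) (l b * u c + l c * u b) * nn b
   + \sum_(b < n) nn b * \sum_(d < n) G d c * g d b
   + \sum_(b < n) nn b * \sum_(d < n) G d b * g c d.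
  rewrite -sumrN -!big_split; apply: eq_bigr => b _ /=; rewrite Hg; ring.
have := HD1 c; rewrite big_split /= => H.
have -> : \sum_(b < n) g c b * X b = \sum_(b < n) g c b * dn b
    + \sum_(b < n) g c b * \sum_(d < n) G b d * nn d.
  by rewrite -big_split; apply: eq_bigr => b _ /=; rewrite /X; ring.
rewrite /A; move: H; rewrite E T1 -T2 (Hl c) => H.
apply: (solve0 H); ring.
Qed.

Lemma step2 : \sum_(b < n) l b * X b + l2 * dm2 = B.
Proof.
have T3 : \sum_(b < n) l b * \sum_(d < n) G b d * nn d
          = \sum_(b < n) nn b * \sum_(d < n) G d b * l d.
  under [LHS]eq_bigr do rewrite big_distrr /=.
  rewrite [LHS]exchange_big /=; apply: eq_bigr => b _.
  by rewrite big_distrr; apply: eq_bigr => d _ /=; ring.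
have E : \sum_(b < n) nn b * dl b = \sum_(b < n) (f b - l2 * u b) * nn b
   + \sum_(b < n) nn b * \sum_(d < n) G d b * l d.
  rewrite -!big_split; apply: eq_bigr => b _ /=; rewrite Hl; ring.
have := HD2; rewrite big_split /= => H.
have -> : \sum_(b < n) l b * X b = \sum_(b < n) l b * dn b
    + \sum_(b < n) l b * \sum_(d < n) G b d * nn d.
  by rewrite -big_split; apply: eq_bigr => b _ /=; rewrite /X; ring.
rewrite /B; move: H; rewrite E T3 => H.
apply: (solve0 H); ring.
Qed.

Definition Un := \sum_(b < n) u b * nn b.

Lemma A_simpl d : A d = u d - m2 * f d + l d * Un.
Proof.
rewrite /A /Un.
have -> : \sum_(b < n) (l b * u d + l d * u b) * nn b
   = u d * \sum_(b < n) l b * nn b + l d * \sum_(b < n) u b * nn b.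
  rewrite !big_distrr -big_split; apply: eq_bigr => b _ /=; ring.
have E : \sum_(b < n) l b * nn b = 1 - m2 * l2 by rewrite -Hw2; ring.
rewrite E; ring.
Qed.

Lemma B_simpl : B = - \sum_(b < n) f b * nn b + l2 * Un - m2 * dl2.
Proof.
rewrite /B /Un.
have -> : \sum_(b < n) (f b - l2 * u b) * nn b
   = \sum_(b < n) f b * nn b - l2 * \sum_(b < n) u b * nn b.
  rewrite big_distrr -sumrN -big_split; apply: eq_bigr => b _ /=; ring.
ring.
Qed.

Lemma stepK c : X c = \sum_(d < n) p c d * (u d - m2 * f d)
   + nn c * (- \sum_(b < n) f b * nn b - m2 * dl2).
Proof.
have e1 : X c = \sum_(b < n) (\sum_(d < n) p c d * g d b + l b * nn c) * X b.
  under eq_bigr do rewrite HPg.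
  rewrite (bigD1 c) //= eqxx mul1r big1 ?addr0 // => b.
  by rewrite eq_sym => /negbTE ->; rewrite mul0r.
have e2 : \sum_(b < n) (\sum_(d < n) p c d * g d b + l b * nn c) * X b
   = \sum_(d < n) p c d * (\sum_(b < n) g d b * X b)
     + nn c * \sum_(b < n) l b * X b.
  under eq_bigr do rewrite mulrDl big_distrl /=.
  rewrite big_split /=; congr (_ + _).
    rewrite exchange_big /=; apply: eq_bigr => d _.
    by rewrite big_distrr; apply: eq_bigr => b _ /=; ring.
  by rewrite big_distrr; apply: eq_bigr => b _ /=; ring.
have e3 : \sum_(d < n) p c d * (\sum_(b < n) g d b * X b)
   = \sum_(d < n) p c d * (u d - m2 * f d) + (\sum_(d < n) p c d * l d) * (Un - dm2).
  rewrite big_distrl -big_split; apply: eq_bigr => d _ /=.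
  have := step1 d; rewrite A_simpl => H.
  have -> : \sum_(b < n) g d b * X b = u d - m2 * f d + l d * Un - l d * dm2
    by rewrite -H; ring.
  ring.
have e4 : \sum_(d < n) p c d * l d = - (l2 * nn c) by apply: (solve0 (HPl c)); ring.
have e5 : \sum_(b < n) l b * X b = B - l2 * dm2 by rewrite -step2; ring.
rewrite e1 e2 e3 e4 e5 B_simpl; ring.
Qed.

Hypothesis Hgs : forall d b, g d b = g b d.

Lemma stepY : dm2 = \sum_(d < n) nn d * u d + Un
   - 2 * m2 * \sum_(b < n) f b * nn b - m2 ^+ 2 * dl2.
Proof.
have e1 : \sum_(d < n) nn d * A d = - m2 * \sum_(b < n) l b * X b
     + dm2 * \sum_(d < n) l d * nn d.
  under eq_bigr do rewrite -step1.
  have -> : \sum_(d < n) nn d * (\sum_(b < n) g d b * X b + l d * dm2)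
     = \sum_(b < n) X b * (\sum_(d < n) g b d * nn d)
       + dm2 * \sum_(d < n) l d * nn d.
    under eq_bigr do rewrite mulrDr big_distrr /=.
    rewrite big_split /=; congr (_ + _).
      rewrite exchange_big /=; apply: eq_bigr => b _.
      by rewrite big_distrr; apply: eq_bigr => d _ /=; rewrite Hgs; ring.
    by rewrite big_distrr; apply: eq_bigr => d _ /=; ring.
  have -> : \sum_(b < n) X b * (\sum_(d < n) g b d * nn d)
     = \sum_(b < n) X b * (- m2 * l b).
    apply: eq_bigr => b _; congr (_ * _); apply: (solve0 (Hw b)); ring.
  congr (_ + _); rewrite big_distrr; apply: eq_bigr => b _ /=; ring.
have e2 : \sum_(d < n) nn d * A d = \sum_(d < n) nn d * u d
     - m2 * \sum_(b < n) f b * nn b + (\sum_(d < n) l d * nn d) * Un.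
  under eq_bigr do rewrite A_simpl.
  rewrite big_distrr big_distrl -sumrN -!big_split; apply: eq_bigr => b _ /=; ring.
have e5 : \sum_(b < n) l b * X b = B - l2 * dm2 by rewrite -step2; ring.
have E : \sum_(b < n) l b * nn b = 1 - m2 * l2 by rewrite -Hw2; ring.
move: e1; rewrite e2 e5 B_simpl E => H.
apply: (solveEq (esym H)); ring.
Qed.
End Alg.

Section Gen.
Variables (R : realFieldType) (n : nat).
Local Notation I := 'I_n.

Lemma xch (F : I -> I -> R) (w v : I -> R) :
  \sum_(b < n) w b * \sum_(c < n) F c b * v c
  = \sum_(c < n) v c * \sum_(b < n) F c b * w b.
Proof.
under eq_bigr do rewrite big_distrr /=.
rewrite exchange_big /=; apply: eq_bigr => c _.
by rewrite big_distrr; apply: eq_bigr => b _ /=; ring.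
Qed.

Lemma tri (w : I -> R) (F : I -> I -> I -> R) :
  \sum_(a < n) w a * \sum_(b < n) \sum_(c < n) F a b c
  = \sum_(b < n) \sum_(c < n) \sum_(a < n) w a * F a b c.
Proof.
rewrite (eq_bigr (fun a => \sum_(b < n) \sum_(c < n) w a * F a b c)); last first.
  by move=> a _; rewrite big_distrr; apply: eq_bigr => b _; rewrite big_distrr.
rewrite exchange_big; apply: eq_bigr => b _; by rewrite exchange_big.
Qed.

Lemma DS_lin (Q : I -> I -> R) (h1 h2 : I -> R) k1 k2 :
  \sum_(b < n) \sum_(c < n) Q b c * (k1 * h1 c + k2 * h2 c)
  = k1 * \sum_(b < n) \sum_(c < n) Q b c * h1 c
    + k2 * \sum_(b < n) \sum_(c < n) Q b c * h2 c.
Proof.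
rewrite !big_distrr -big_split; apply: eq_bigr => b _ /=.
rewrite !big_distrr -big_split; apply: eq_bigr => c _ /=; ring.
Qed.

Lemma sum_lin2 (A B : I -> R) k :
  \sum_(i < n) (A i + k * B i) = \sum_(i < n) A i + k * \sum_(i < n) B i.
Proof. by rewrite big_split big_distrr. Qed.
End Gen.

Theorem lemmaC1 (R : realType) (n : nat) (U : set 'rV[R]_n)
  (gam : 'I_n -> 'I_n -> 'rV[R]_n -> R) (ell : 'I_n -> 'rV[R]_n -> R)
  (ell2 : 'rV[R]_n -> R) (P : 'I_n -> 'I_n -> 'rV[R]_n -> R)
  (nv : 'I_n -> 'rV[R]_n -> R) (n2 : 'rV[R]_n -> R)
  (Gam : 'I_n -> 'I_n -> 'I_n -> 'rV[R]_n -> R) (th : 'I_n -> 'rV[R]_n -> R) :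
  metric_hypersurface_data U gam ell ell2 P nv n2 ->
  is_ring_nabla U gam ell ell2 nv n2 Gam ->
  (forall a, diff_on U (th a)) ->
  forall x, U x ->
  let Ut := Uten nv n2 gam ell in
  let F := Ften ell in
  let s := sform nv ell in
  let thn := contr th nv in
  let PU a := \sum_(b < n) \sum_(c < n) P b c x * Ut a c x * th b x in
  let PF a := \sum_(b < n) \sum_(c < n) P b c x * F a c x * th b x in
  (forall a,
     \sum_(b < n) nv b x * cov_form Gam th a b x
     = cov_fun thn a x - thn x * s a x - PU a
       + n2 x * (thn x * cov_fun ell2 a x + PF a)) /\
  (forall a,
     \sum_(b < n) nv b x * cov_form Gam th b a x
     = lie_form nv th a x - thn x * s a x - PU a
       + n2 x * (thn x * cov_fun ell2 a x + PF a)) /\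
  (forall a,
     \sum_(b < n) nv b x * (cov_form Gam th a b x + cov_form Gam th b a x)
     = lie_form nv th a x + cov_fun thn a x - 2 * (thn x * s a x + PU a)
       + 2 * n2 x * (thn x * cov_fun ell2 a x + PF a)) /\
  (\sum_(a < n) \sum_(b < n) nv a x * nv b x * cov_form Gam th a b x
   = lie_fun nv thn x + n2 x * thn x * lie_fun nv ell2 x
     + \sum_(b < n) \sum_(c < n) P b c x * th b x *
         (2 * n2 x * s c x - 2^-1 * n2 x ^+ 2 * cov_fun ell2 c x
          - 2^-1 * cov_fun n2 c x)).
Proof.
move=> [oU [dgam [dell [dell2 [dP [dnv [dn2 Hx]]]]]]] Hnab dth x Ux.
have [Hgs [HPs [_ [Hw [Hw2 [HPl HPg]]]]]] := Hx x Ux.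
have [HGs [Hcs Hcl]] := Hnab x Ux.
cbv zeta.
have dv : forall f, diff_on U f -> forall v, derivable f x v.
  by move=> f df v; apply: diff_derivable; exact: df.
have dgs : forall a b i, pd (gam a b) i x = pd (gam b a) i x.
  move=> a b i; apply: (@pd_near R n U _ _ x _ oU Ux) => y Uy.
  by have [H _] := Hx y Uy; apply: H.
have D1 : forall a c,
  \sum_(b < n) (gam c b x * pd (nv b) a x + nv b x * pd (gam c b) a x)
  + (n2 x * pd (ell c) a x + ell c x * pd n2 a x) = 0.
  move=> a c; rewrite /pd -pd_sumprod; try by move=> *; apply: dv.
  rewrite (@pd_near R n U _ (fun _ => 0) x _ oU Ux); first exact: pd_cst.
  by move=> y Uy; have [_ [_ [_ [H _]]]] := Hx y Uy; apply: H.
have D2 : forall a,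
  \sum_(b < n) (ell b x * pd (nv b) a x + nv b x * pd (ell b) a x)
  + (n2 x * pd ell2 a x + ell2 x * pd n2 a x) = 0.
  move=> a; rewrite /pd -pd_sumprod; try by move=> *; apply: dv.
  rewrite (@pd_near R n U _ (fun _ => 1) x _ oU Ux); first exact: pd_cst.
  by move=> y Uy; have [_ [_ [_ [_ [H _]]]]] := Hx y Uy; apply: H.
have Hg : forall a c b, pd (gam c b) a x =
   - ell b x * Uten nv n2 gam ell a c x - ell c x * Uten nv n2 gam ell a b x
   + \sum_(d < n) Gam d a c x * gam d b x + \sum_(d < n) Gam d a b x * gam c d x.
  move=> a c b; have := Hcs a c b; rewrite /cov_sym2 => H.
  by apply: (solveEq H); ring.
have Hl : forall a c, pd (ell c) a x = Ften ell a c x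
   - ell2 x * Uten nv n2 gam ell a c x + \sum_(d < n) Gam d a c x * ell d x.
  move=> a c; have := Hcl a c; rewrite /cov_form => H.
  by apply: (solveEq H); ring.
have KK : forall a c, pd (nv c) a x + \sum_(d < n) Gam c a d x * nv d x
  = \sum_(d < n) P c d x * (Uten nv n2 gam ell a d x - n2 x * Ften ell a d x)
    + nv c x * (- \sum_(b < n) Ften ell a b x * nv b x - n2 x * pd ell2 a x).
  move=> a; apply: (@stepK R n (fun c b => gam c b x) (fun c b => P c b x)
    (fun c b => Gam c a b x) (fun c b => pd (gam c b) a x) (fun c => ell c x)
    (fun c => nv c x) (fun b => pd (nv b) a x) (fun c => pd (ell c) a x)
    (fun d => Uten nv n2 gam ell a d x) (fun d => Ften ell a d x)
    (ell2 x) (n2 x) (pd n2 a x) (pd ell2 a x)) => //=.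
have YY : forall a, pd n2 a x = \sum_(d < n) nv d x * Uten nv n2 gam ell a d x
    + \sum_(b < n) Uten nv n2 gam ell a b x * nv b x
    - 2 * n2 x * \sum_(b < n) Ften ell a b x * nv b x - n2 x ^+ 2 * pd ell2 a x.
  move=> a; apply: (@stepY R n (fun c b => gam c b x)
    (fun c b => Gam c a b x) (fun c b => pd (gam c b) a x) (fun c => ell c x)
    (fun c => nv c x) (fun b => pd (nv b) a x) (fun c => pd (ell c) a x)
    (fun d => Uten nv n2 gam ell a d x) (fun d => Ften ell a d x)
    (ell2 x) (n2 x) (pd n2 a x) (pd ell2 a x)) => //=.
rewrite /cov_fun.
have sa : forall a, sform nv ell a x = - \sum_(b < n) Ften ell a b x * nv b x.
  move=> a; rewrite /sform -sumrN; apply: eq_bigr => b _; rewrite /Ften; ring.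
have KS : forall a,
  \sum_(c < n) th c x * (pd (nv c) a x + \sum_(d < n) Gam c a d x * nv d x)
  = contr th nv x * sform nv ell a x
    + \sum_(b < n) \sum_(c < n) P b c x * Uten nv n2 gam ell a c x * th b x
    - n2 x * (contr th nv x * pd ell2 a x
    + \sum_(b < n) \sum_(c < n) P b c x * Ften ell a c x * th b x).
  move=> a; under eq_bigr do rewrite KK.
  rewrite (eq_bigr (fun c => (\sum_(d < n) P c d x * Uten nv n2 gam ell a d x * th c x
      + (- n2 x) * \sum_(d < n) P c d x * Ften ell a d x * th c x)
      + (- \sum_(b < n) Ften ell a b x * nv b x - n2 x * pd ell2 a x)
        * (th c x * nv c x))); last first.
    move=> c _.
    have -> : \sum_(d < n) P c d x * Uten nv n2 gam ell a d x * th c x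
      + (- n2 x) * \sum_(d < n) P c d x * Ften ell a d x * th c x
      = th c x * \sum_(d < n) P c d x * (Uten nv n2 gam ell a d x - n2 x * Ften ell a d x).
      rewrite -sum_lin2 big_distrr; apply: eq_bigr => d _ /=; ring.
    ring.
  rewrite !sum_lin2 sa /contr; ring.
have Epdthn : forall a, pd (contr th nv) a x
   = \sum_(b < n) th b x * pd (nv b) a x + \sum_(b < n) nv b x * pd (th b) a x.
  move=> a; rewrite -big_split /pd /contr pd_sumprod0 //; by move=> *; apply: dv.
have KS2 : forall a,
  \sum_(c < n) th c x * (pd (nv c) a x + \sum_(d < n) Gam c a d x * nv d x)
  = \sum_(c < n) th c x * pd (nv c) a x
    + \sum_(c < n) th c x * \sum_(d < n) Gam c a d x * nv d x.
  by move=> a; rewrite -big_split; apply: eq_bigr => c _ /=; ring.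
have Id1 : forall a,
  \sum_(b < n) nv b x * cov_form Gam th a b x
  = pd (contr th nv) a x - contr th nv x * sform nv ell a x
    - \sum_(b < n) \sum_(c < n) P b c x * Uten nv n2 gam ell a c x * th b x
    + n2 x * (contr th nv x * pd ell2 a x
      + \sum_(b < n) \sum_(c < n) P b c x * Ften ell a c x * th b x).
  move=> a.
  have X1 := @xch R n (fun c b => Gam c a b x) (fun b => nv b x) (fun c => th c x).
  simpl in X1.
  have E : \sum_(b < n) nv b x * cov_form Gam th a b x
    = \sum_(b < n) nv b x * pd (th b) a x
      - \sum_(b < n) nv b x * \sum_(c < n) Gam c a b x * th c x.
    by rewrite -sumrB; apply: eq_bigr => b _ /=; rewrite /cov_form; ring.
  rewrite E X1 Epdthn; have := KS a; rewrite KS2 => H.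
  first [apply: (solveEq H); ring | apply: (solveEq (esym H)); ring].
have Id2 : forall a,
  \sum_(b < n) nv b x * cov_form Gam th b a x
  = lie_form nv th a x - contr th nv x * sform nv ell a x
    - \sum_(b < n) \sum_(c < n) P b c x * Uten nv n2 gam ell a c x * th b x
    + n2 x * (contr th nv x * pd ell2 a x
      + \sum_(b < n) \sum_(c < n) P b c x * Ften ell a c x * th b x).
  move=> a.
  have X1 := @xch R n (fun c b => Gam c a b x) (fun b => nv b x) (fun c => th c x).
  simpl in X1.
  have E : \sum_(b < n) nv b x * cov_form Gam th b a x
    = \sum_(b < n) nv b x * pd (th a) b x
      - \sum_(b < n) nv b x * \sum_(c < n) Gam c a b x * th c x.
    rewrite -sumrB; apply: eq_bigr => b _ /=; rewrite /cov_form.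
    have -> : \sum_(c < n) Gam c b a x * th c x = \sum_(c < n) Gam c a b x * th c x.
      by apply: eq_bigr => c _; rewrite HGs.
    ring.
  have EL : lie_form nv th a x = \sum_(b < n) nv b x * pd (th a) b x
      + \sum_(b < n) th b x * pd (nv b) a x.
    by rewrite /lie_form -big_split.
  rewrite E X1 EL; have := KS a; rewrite KS2 => H.
  first [apply: (solveEq H); ring | apply: (solveEq (esym H)); ring].
split; first exact: Id1.
split; first exact: Id2.
split.
  move=> a.
  have -> : \sum_(b < n) nv b x * (cov_form Gam th a b x + cov_form Gam th b a x)
    = \sum_(b < n) nv b x * cov_form Gam th a b x
      + \sum_(b < n) nv b x * cov_form Gam th b a x.
    by rewrite -big_split; apply: eq_bigr => b _ /=; ring.
  rewrite Id1 Id2; ring.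
have Usym : forall a b, Uten nv n2 gam ell a b x = Uten nv n2 gam ell b a x.
  move=> a b; rewrite /Uten /lie_sym2.
  have -> : \sum_(c < n) (nv c x * pd (gam a b) c x + gam c b x * pd (nv c) a x
                + gam a c x * pd (nv c) b x)
     = \sum_(c < n) (nv c x * pd (gam b a) c x + gam c a x * pd (nv c) b x
                + gam b c x * pd (nv c) a x).
    apply: eq_bigr => c _; rewrite (dgs a b) (Hgs c b) (Hgs a c); ring.
  ring.
have F2 : \sum_(a < n) nv a x * sform nv ell a x = 0.
  have E1 : \sum_(a < n) nv a x * sform nv ell a x
      = \sum_(a < n) nv a x * \sum_(c < n) Ften ell c a x * nv c x.
    apply: eq_bigr => a _; rewrite /sform; congr (_ * _).
    by apply: eq_bigr => c _; ring.
  have E2 := @xch R n (fun c b => Ften ell c b x) (fun b => nv b x) (fun c => nv c x).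
  simpl in E2.
  have E3 : \sum_(c < n) nv c x * \sum_(b < n) Ften ell c b x * nv b x
      = - \sum_(a < n) nv a x * sform nv ell a x.
    by rewrite -sumrN; apply: eq_bigr => c _; rewrite sa; ring.
  have : \sum_(a < n) nv a x * sform nv ell a x
       = - \sum_(a < n) nv a x * sform nv ell a x by rewrite {1}E1 E2 E3.
  lra.
pose NU c := \sum_(a < n) nv a x * Uten nv n2 gam ell a c x.
have F3 : \sum_(a < n) nv a x *
     \sum_(b < n) \sum_(c < n) P b c x * Uten nv n2 gam ell a c x * th b x
   = \sum_(b < n) \sum_(c < n) (P b c x * th b x) * NU c.
  have T := @tri R n (fun a => nv a x)
     (fun a b c => P b c x * Uten nv n2 gam ell a c x * th b x).
  simpl in T; rewrite T; apply: eq_bigr => b _; apply: eq_bigr => c _.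
  by rewrite /NU big_distrr; apply: eq_bigr => a _ /=; ring.
have F4 : \sum_(a < n) nv a x *
     \sum_(b < n) \sum_(c < n) P b c x * Ften ell a c x * th b x
   = \sum_(b < n) \sum_(c < n) (P b c x * th b x) * sform nv ell c x.
  have T := @tri R n (fun a => nv a x)
     (fun a b c => P b c x * Ften ell a c x * th b x).
  simpl in T; rewrite T; apply: eq_bigr => b _; apply: eq_bigr => c _.
  by rewrite /sform big_distrr; apply: eq_bigr => a _ /=; ring.
have F5 : forall c, 2 * n2 x * sform nv ell c x - 2^-1 * n2 x ^+ 2 * pd ell2 c x
     - 2^-1 * pd n2 c x = (-1) * NU c + n2 x * sform nv ell c x.
  move=> c; rewrite (YY c) sa.
  have -> : \sum_(d < n) nv d x * Uten nv n2 gam ell c d x = NU c.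
    by apply: eq_bigr => d _; rewrite Usym.
  have -> : \sum_(b < n) Uten nv n2 gam ell c b x * nv b x = NU c.
    by apply: eq_bigr => d _; rewrite Usym mulrC.
  by field.
have L : \sum_(a < n) \sum_(b < n) nv a x * nv b x * cov_form Gam th a b x
   = \sum_(a < n) nv a x * \sum_(b < n) nv b x * cov_form Gam th a b x.
  apply: eq_bigr => a _; rewrite big_distrr; apply: eq_bigr => b _ /=; ring.
rewrite L.
under eq_bigr do rewrite Id1.
rewrite (eq_bigr (fun a => nv a x * pd (contr th nv) a x
   + (- contr th nv x) * (nv a x * sform nv ell a x)
   + (-1) * (nv a x * \sum_(b < n) \sum_(c < n) P b c x * Uten nv n2 gam ell a c x * th b x)
   + (n2 x * contr th nv x) * (nv a x * pd ell2 a x)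
   + n2 x * (nv a x * \sum_(b < n) \sum_(c < n) P b c x * Ften ell a c x * th b x)));
  last by move=> a _; ring.
rewrite !sum_lin2 F2 F3 F4 /lie_fun.
have -> : \sum_(b < n) \sum_(c < n) P b c x * th b x *
       (2 * n2 x * sform nv ell c x - 2^-1 * n2 x ^+ 2 * pd ell2 c x - 2^-1 * pd n2 c x)
   = \sum_(b < n) \sum_(c < n) (P b c x * th b x) *
    ((-1) * NU c + n2 x * sform nv ell c x).
  by apply: eq_bigr => b _; apply: eq_bigr => c _; rewrite -F5.
rewrite DS_lin; ring.
Qed.
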